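(* Let $\varepsilon>0$, $0<\kappa<1$, and $M\ge0$. Let $\{a_n\}_{n=1}^\infty$ and $\{b_n\}_{n=1}^\infty$ be sequences of positive integers such that $\{a_n\}$ is non-decreasing and $\limsup_{n\to\infty}a_n^{(M+2)^{-n}}=\infty$. Suppose that for all sufficiently large $n$, $a_n\ge n^{1+\varepsilon}$ and $b_n\le 2^{(\log_2 a_n)^\kappa}$. Then for any fixed $0<c<1$, \[\liminf_{N\to\infty}2^{N^2(\log_2 a_{N-1})^c}\Big(\prod_{n=1}^{N-1}a_n\Big)^{M+1}\sum_{n=N}^\infty\Big|\frac{b_n}{a_n}\Big|=0.\] *)

(* Defs.v *)
From Stdlib Require Import Reals Lra Lia.
Open Scope R_scope.

Definition log2 (x : R) : R := ln x / ln 2.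

Fixpoint prod_from1 (f : nat -> R) (m : nat) : R :=
  match m with
  | O => 1
  | S k => prod_from1 f k * f (S k)
  end.

(* The quantity whose liminf is considered, with tail sum S = sum_{n>=N} b_n/a_n *)
Definition quantity (a : nat -> nat) (M c : R) (N : nat) (S : R) : R :=
  Rpower 2 (INR N ^ 2 * Rpower (log2 (INR (a (N - 1)%nat))) c)
  * Rpower (prod_from1 (fun n => INR (a n)) (N - 1)) (M + 1) * S.

(* Main.v *)
Require Import Defs.
From Stdlib Require Import Reals Lra Lia Psatz Classical.
Open Scope R_scope.

Lemma bern2 (d : R) (j : nat) : 0 <= d ->
  1 + INR j * d + INR j * (INR j - 1) / 2 * d ^ 2 <= (1 + d) ^ j.
Proof.
  intros Hd. induction j as [|j IH].
  - simpl. lra.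
  - rewrite S_INR. simpl pow.
    assert (0 <= INR j) by apply pos_INR.
    assert (H3 : 0 <= INR j * (INR j - 1) / 2 * d ^ 3).
    { destruct j. simpl; lra.
      rewrite S_INR in *. assert (0 <= INR j) by apply pos_INR.
      apply Rmult_le_pos; [|apply pow_le; lra]. nra. }
    assert (H4 := Rmult_le_compat_l (1 + d) _ _ ltac:(lra) IH).
    nra.
Qed.

Lemma poly_exp (g : R) : 1 < g -> exists G, 0 < G /\ forall N : nat, INR N ^ 2 <= G * g ^ N.
Proof.
  intros Hg. set (d := g - 1).
  exists (2 / d ^ 2 + 1 / d). split.
  { unfold d. assert (0 < g - 1) by lra.
    assert (H5 : 0 < 2 / (g-1)^2) by (apply Rdiv_lt_0_compat; [lra| apply pow_lt; lra]).
    assert (H6 : 0 < 1 / (g-1)) by (apply Rdiv_lt_0_compat; lra). lra. }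
  intros N. pose proof (bern2 d N) as B. replace (1 + d) with g in B by (unfold d; lra).
  assert (Hd : 0 < d) by (unfold d; lra). specialize (B (Rlt_le _ _ Hd)).
  assert (0 <= INR N) by apply pos_INR.
  assert (0 <= INR N * (INR N - 1)).
  { destruct N. simpl; lra. rewrite S_INR. assert (0 <= INR N) by apply pos_INR. nra. }
  assert (0 <= INR N * (INR N - 1) / 2 * d ^ 2).
  { apply Rmult_le_pos; [lra| apply pow_le; lra]. }
  assert (0 <= INR N * d) by (apply Rmult_le_pos; lra).
  assert (HH1 : INR N * d <= g ^ N) by lra.
  assert (HH2 : INR N * (INR N - 1) * d ^ 2 <= 2 * g ^ N) by lra.
  assert (E : INR N ^ 2 = INR N * (INR N - 1) + INR N) by ring.
  rewrite E, Rmult_plus_distr_r.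
  apply Rplus_le_compat.
  - unfold Rdiv. apply (Rmult_le_reg_r (d^2)). apply pow_lt; lra.
    replace (2 * / d ^ 2 * g ^ N * d ^ 2) with (2 * g ^ N) by (field; lra). lra.
  - unfold Rdiv. apply (Rmult_le_reg_r d). lra.
    replace (1 * / d * g ^ N * d) with (g ^ N) by (field; lra). lra.
Qed.


Lemma exp_le_exp (x y : R) : x <= y -> exp x <= exp y.
Proof. intros H. destruct (Req_dec x y) as [->|]; [lra|]. apply Rlt_le, exp_increasing; lra. Qed.

Lemma exp_le_inv' (x y : R) : exp x <= exp y -> x <= y.
Proof. intros H. destruct (Rle_dec x y); [auto|]. assert (exp y < exp x) by (apply exp_increasing; lra). lra. Qed.

Lemma ln_le' (x y : R) : 0 < x -> x <= y -> ln x <= ln y.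
Proof. intros H1 H2. destruct (Req_dec x y) as [->|]; [lra|]. apply Rlt_le, ln_increasing; lra. Qed.

Lemma ln_nonneg (x : R) : 1 <= x -> 0 <= ln x.
Proof. intros H. rewrite <- ln_1. apply ln_le'; lra. Qed.

Lemma ln0 : ln 0 = 0.
Proof. unfold ln. destruct (Rlt_dec 0 0) as [h|h]; [exfalso; lra|reflexivity]. Qed.

Lemma Rpower0 (k : R) : Rpower 0 k = 1.
Proof. unfold Rpower. rewrite ln0, Rmult_0_r. apply exp_0. Qed.

Lemma Rpower_pos (x k : R) : 0 < Rpower x k.
Proof. unfold Rpower. apply exp_pos. Qed.

Lemma sub_lin (k : R) : 0 <= k < 1 -> forall eta, 0 < eta ->
  exists C, 0 < C /\ forall z, 0 <= z -> Rpower z k <= eta * z + C.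
Proof.
  intros Hk eta He.
  set (Z0 := exp (- ln eta / (1 - k))).
  exists (1 + Rpower Z0 k). split. { pose proof (Rpower_pos Z0 k). lra. }
  intros z Hz. destruct (Req_dec z 0) as [->|Hz0].
  { rewrite Rpower0. pose proof (Rpower_pos Z0 k). lra. }
  assert (Hzp : 0 < z) by lra.
  assert (HZ0 : 0 < Z0) by apply exp_pos.
  destruct (Rle_dec z Z0) as [Hle|Hgt].
  - assert (Rpower z k <= Rpower Z0 k) by (apply Rle_Rpower_l; lra). nra.
  - assert (Hl : ln Z0 <= ln z) by (apply Rlt_le, ln_increasing; lra).
    unfold Z0 in Hl. rewrite ln_exp in Hl.
    assert (eta * z = exp (ln eta + ln z)) by (rewrite exp_plus, !exp_ln; lra).
    assert (Rpower z k <= eta * z); [|pose proof (Rpower_pos Z0 k); lra].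
    rewrite H. unfold Rpower. apply exp_le_exp.
    assert (- ln eta <= (1 - k) * ln z).
    { apply (Rmult_le_compat_l (1-k)) in Hl; [|lra].
      replace ((1 - k) * (- ln eta / (1 - k))) with (- ln eta) in Hl by (field; lra). lra. }
    nra.
Qed.

Lemma Rpower_mono2 (z Y k c : R) : 0 <= z <= Y -> 1 <= Y -> 0 <= k <= c ->
  Rpower z k <= Rpower Y c.
Proof.
  intros Hz HY Hk. destruct (Req_dec z 0) as [->|Hz0].
  - rewrite Rpower0. unfold Rpower. rewrite <- exp_0. apply exp_le_exp.
    assert (0 <= ln Y). { rewrite <- ln_1. destruct (Req_dec Y 1). subst; lra. apply Rlt_le, ln_increasing; lra. }
    nra.
  - unfold Rpower. apply exp_le_exp.
    assert (ln z <= ln Y). { destruct (Req_dec z Y). subst; lra. apply Rlt_le, ln_increasing; lra. }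
    assert (0 <= ln Y). { rewrite <- ln_1. destruct (Req_dec Y 1). subst; lra. apply Rlt_le, ln_increasing; lra. }
    destruct (Rle_dec (ln z) 0); nra.
Qed.

Lemma Rpower_pow_distr (x c : R) (N : nat) : 0 < x -> Rpower (x ^ N) c = (Rpower x c) ^ N.
Proof.
  intros Hx. rewrite <- (Rpower_pow N x Hx). rewrite Rpower_mult.
  rewrite <- Rpower_pow by apply Rpower_pos. rewrite Rpower_mult. f_equal. ring.
Qed.

Lemma ln_le_xm1 (y : R) : 0 < y -> ln y <= y - 1.
Proof. intros H. pose proof (exp_ineq1_le (ln y)). rewrite exp_ln in H0 by lra. lra. Qed.

Lemma tele (q x : R) : 1 < q -> 1 <= x ->
  Rpower (x+1) (-q) + / (q-1) * Rpower (x+1) (-(q-1)) <= / (q-1) * Rpower x (-(q-1)).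
Proof.
  intros Hq Hx. set (s := q - 1). assert (Hs : 0 < s) by (unfold s; lra).
  unfold Rpower. set (a := ln x). set (b := ln (x+1)).
  assert (Hba : 1 / (x+1) <= b - a).
  { unfold a, b.
    pose proof (ln_le_xm1 (x / (x+1)) ltac:(apply Rdiv_lt_0_compat; lra)) as H.
    unfold Rdiv in H. rewrite ln_mult in H by (try apply Rinv_0_lt_compat; lra).
    rewrite ln_Rinv in H by lra.
    assert (x * / (x + 1) - 1 = - (1/(x+1))) by (field; lra). lra. }
  assert (E1 : exp (- q * b) = exp (- s * b) / (x+1)).
  { replace (- q * b) with (- s * b + - b) by (unfold s; ring).
    rewrite exp_plus, exp_Ropp. unfold b. rewrite exp_ln by lra. field. lra. }
  assert (E2 : exp (- s * a) = exp (- s * b) * exp (s * (b - a))).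
  { rewrite <- exp_plus. f_equal. ring. }
  pose proof (exp_ineq1_le (s * (b - a))) as E3.
  rewrite E1, E2. replace (-(q-1)) with (-s) by (unfold s; ring).
  assert (P : 0 < exp (- s * b)) by apply exp_pos.
  assert (Hs1 : s * (1/(x+1)) <= s * (b - a)) by (apply Rmult_le_compat_l; lra).
  assert (0 < / s) by (apply Rinv_0_lt_compat; lra).
  assert (exp (- s * b) / (x + 1) = exp (- s * b) * / s * (s * (1 / (x+1)))) by (field; lra).
  rewrite H0.
  assert (exp (- s * b) * / s * (s * (1 / (x + 1))) <= exp (- s * b) * / s * (exp (s * (b - a)) - 1)).
  { apply Rmult_le_compat_l. apply Rmult_le_pos; lra. lra. }
  nra.
Qed.

Lemma pseries_aux (q : R) (N : nat) : 1 < q -> (1 <= N)%nat -> forall n,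
  sum_f_R0 (fun k => Rpower (INR (N + k)) (-q)) n + / (q-1) * Rpower (INR (N+n)) (-(q-1))
  <= Rpower (INR N) (-q) + / (q-1) * Rpower (INR N) (-(q-1)).
Proof.
  intros Hq HN n. induction n as [|n IH].
  - simpl. rewrite Nat.add_0_r. lra.
  - simpl sum_f_R0. replace (N + S n)%nat with (S (N + n)) by lia. rewrite S_INR.
    pose proof (tele q (INR (N+n)) Hq).
    assert (1 <= INR (N+n)) by (apply (le_INR 1); lia).
    specialize (H H0). lra.
Qed.

Lemma pseries (q : R) (N : nat) : 1 < q -> (1 <= N)%nat -> forall n,
  sum_f_R0 (fun k => Rpower (INR (N + k)) (-q)) n <= q / (q - 1).
Proof.
  intros Hq HN n. pose proof (pseries_aux q N Hq HN n).
  assert (0 < / (q-1)) by (apply Rinv_0_lt_compat; lra).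
  assert (0 <= / (q-1) * Rpower (INR (N+n)) (-(q-1))) by (pose proof (Rpower_pos (INR (N+n)) (-(q-1))); nra).
  assert (HN1 : 1 <= INR N) by (apply (le_INR 1); lia).
  assert (forall t, 0 <= t -> Rpower (INR N) (-t) <= 1).
  { intros t Ht. unfold Rpower. rewrite <- exp_0. apply exp_le_exp.
    pose proof (ln_nonneg _ HN1). nra. }
  pose proof (H2 q ltac:(lra)). pose proof (H2 (q-1) ltac:(lra)).
  assert (q / (q-1) = 1 + / (q-1)) by (field; lra). rewrite H5.
  assert (/ (q - 1) * Rpower (INR N) (- (q - 1)) <= / (q-1)) by nra.
  lra.
Qed.

Lemma Rdiv_le_0_compat (x y : R) : 0 <= x -> 0 < y -> 0 <= x / y.
Proof. intros. unfold Rdiv. apply Rmult_le_pos; [auto| apply Rlt_le, Rinv_0_lt_compat; auto]. Qed.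
Lemma alg (F Phi' E0 Lm J u v P R Q q M r rho es : R) :
 0 <= F -> F + Q/2*P <= Q*R -> Phi' <= F + (M+1)*J*Lm -> Lm <= F + E0 + q*(J-1) -> 0 <= E0 -> 1 <= J -> 0 <= M -> r = M+2 ->
 1 + J*(M+1) + J*(J-1)/2*(M+1)^2 <= u -> v*r <= u*rho -> E0 + 2*q <= es*Q*P -> es = (r-rho)/(2*r) -> 0 < Q -> 0 <= P -> 0 <= q -> 0 < rho ->
 Phi' + Q/2*(P*v) <= Q*(R*u).
Proof.
  intros HF HP H1 H2 HE HJ HM Hr Hu Hv HE2 Hes HQ HP0 Hq Hrho.
  assert (HMJ : 0 <= (M+1)*J) by nra.
  assert (H3 : Phi' <= F * (1 + (M+1)*J) + (M+1)*J*E0 + q*((M+1)*J*(J-1))).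
  { assert ((M+1)*J*Lm <= (M+1)*J*(F + E0 + q*(J-1))) by (apply Rmult_le_compat_l; auto). nra. }
  assert (HJJ : 0 <= J*(J-1)) by nra.
  assert (Hu1 : 1 + (M+1)*J <= u) by nra.
  assert (Hu2 : (M+1)*J*(J-1) <= 2*u).
  { assert (J*(J-1) <= J*(J-1)*(M+1)) by nra. assert (J*(J-1)*(M+1)^2/2 <= u) by nra. nra. }
  assert (H4 : F * (1 + (M+1)*J) <= F * u) by (apply Rmult_le_compat_l; auto).
  assert (H5 : (M+1)*J*E0 <= u*E0) by (apply Rmult_le_compat_r; lra).
  assert (H6 : q*((M+1)*J*(J-1)) <= q*(2*u)) by (apply Rmult_le_compat_l; auto).
  assert (Hu0 : 0 <= u) by lra.
  assert (H7 : F*u <= (Q*R - Q/2*P)*u) by (apply Rmult_le_compat_r; lra).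
  assert (H8 : u*(E0 + 2*q) <= u*(es*Q*P)) by (apply Rmult_le_compat_l; lra).
  assert (Hr0 : 0 < r) by lra.
  assert (H9 : es * r * 2 = r - rho) by (rewrite Hes; field; lra).
  assert (H10 : Q/2*P*(v*r) <= Q/2*P*(u*rho)) by (apply Rmult_le_compat_l; [nra|lra]).
  assert (H11 : u*(es*Q*P) * r = Q/2*P*u*(r-rho)) by (rewrite Hes; field; lra).
  assert (H12 : Q/2*(P*v) * r <= Q/2*P*u*r - u*(es*Q*P)*r) by nra.
  assert (H13 : Q/2*(P*v) <= Q/2*P*u - u*(es*Q*P)).
  { apply (Rmult_le_reg_r r); [lra|]. nra. }
  nra.
Qed.

Lemma prod_pos (a : nat -> nat) : (forall n, (1 <= n)%nat -> (0 < a n)%nat) ->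
  forall n, 0 < prod_from1 (fun i => INR (a i)) n.
Proof.
  intros Ha n. induction n as [|n IH]; simpl. lra.
  apply Rmult_lt_0_compat; auto. apply lt_0_INR. apply Ha. lia.
Qed.

Lemma exQ (A0 B e : R) : 0 < e -> exists Q, 0 < Q /\ A0 <= e / 2 * Q /\ B <= Q.
Proof.
  intros He. exists (Rmax 1 (Rmax (2 * A0 / e) B)). split.
  - pose proof (Rmax_l 1 (Rmax (2 * A0 / e) B)). lra.
  - split.
    + pose proof (Rmax_r 1 (Rmax (2 * A0 / e) B)). pose proof (Rmax_l (2 * A0 / e) B).
      assert (A0 = e / 2 * (2 * A0 / e)) by (field; lra).
      assert (e / 2 * (2 * A0 / e) <= e / 2 * Rmax 1 (Rmax (2 * A0 / e) B)) by (apply Rmult_le_compat_l; lra).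
      lra.
    + pose proof (Rmax_r 1 (Rmax (2 * A0 / e) B)). pose proof (Rmax_r (2 * A0 / e) B). lra.
Qed.

Section Main.
Variables (eps kappa M : R) (a b : nat -> nat) (n0 : nat).
Hypotheses (heps : 0 < eps) (hk0 : 0 < kappa) (hk1 : kappa < 1) (hM : 0 <= M).
Hypothesis ha_pos : forall n, (1 <= n)%nat -> (0 < a n)%nat.
Hypothesis hb_pos : forall n, (1 <= n)%nat -> (0 < b n)%nat.
Hypothesis ha_mono : forall n, (1 <= n)%nat -> (a n <= a (S n))%nat.
Hypothesis Hev : forall n, (n0 <= n)%nat -> (1 <= n)%nat ->
       Rpower (INR n) (1 + eps) <= INR (a n) /\
       INR (b n) <= Rpower 2 (Rpower (log2 (INR (a n))) kappa).

Let eta0 := eps / (2 * (1 + eps)).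
Let q := 1 + eps / 2.
Variable C1 : R.
Hypothesis HC1 : forall z, 0 <= z -> Rpower z kappa <= (eta0 / 2) * z + C1.

Let A n := INR (a n).
Let lam n := ln (A n).
Let t n := INR (b n) / A n.
Let Psi n := ln (prod_from1 (fun i => INR (a i)) n).
Let beta n := ln 2 * Rpower (lam n / ln 2) kappa.

Lemma A_ge1 n : (1 <= n)%nat -> 1 <= A n.
Proof. intros H. unfold A. apply (le_INR 1). specialize (ha_pos n H). lia. Qed.

Lemma lam_nonneg n : (1 <= n)%nat -> 0 <= lam n.
Proof. intros H. apply ln_nonneg, A_ge1, H. Qed.

Lemma lam_mono n m : (1 <= n)%nat -> (n <= m)%nat -> lam n <= lam m.
Proof.
  intros H1 H2. unfold lam. apply ln_le'. pose proof (A_ge1 n H1); lra.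
  unfold A. apply le_INR. induction H2. lia. specialize (ha_mono m ltac:(lia)). lia.
Qed.

Lemma ln2_pos : 0 < ln 2.
Proof. rewrite <- ln_1. apply ln_increasing; lra. Qed.

Lemma eta0_pos : 0 < eta0.
Proof. unfold eta0. apply Rdiv_lt_0_compat; lra. Qed.

Lemma q_eq : q = (1 - eta0) * (1 + eps).
Proof. unfold q, eta0. field. lra. Qed.

Lemma beta_bound n : (1 <= n)%nat -> beta n <= (eta0/2) * lam n + ln 2 * C1.
Proof.
  intros H. unfold beta. pose proof ln2_pos. pose proof (lam_nonneg n H).
  pose proof (HC1 (lam n / ln 2) ltac:(apply Rdiv_le_0_compat; lra)).
  assert (ln 2 * ((eta0 / 2) * (lam n / ln 2) + C1) = (eta0/2) * lam n + ln 2 * C1) by (field; lra).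
  rewrite <- H3. apply Rmult_le_compat_l; lra.
Qed.

Lemma lam_lower n : (n0 <= n)%nat -> (1 <= n)%nat -> (1 + eps) * ln (INR n) <= lam n.
Proof.
  intros H1 H2. destruct (Hev n H1 H2) as [E _].
  assert (0 < INR n) by (apply lt_0_INR; lia).
  apply ln_le' in E; [|apply Rpower_pos]. rewrite ln_Rpower in E. exact E.
Qed.

Lemma t_bound n : (n0 <= n)%nat -> (1 <= n)%nat -> t n <= exp (beta n - lam n).
Proof.
  intros H1 H2. destruct (Hev n H1 H2) as [_ E].
  unfold t, beta. unfold Rminus. rewrite exp_plus, exp_Ropp. unfold lam. rewrite exp_ln by (pose proof (A_ge1 n H2); lra).
  unfold Rdiv. apply Rmult_le_compat_r. pose proof (A_ge1 n H2). apply Rlt_le, Rinv_0_lt_compat; lra.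
  unfold Rpower at 1 in E. unfold log2 in E. fold (A n) in E. rewrite Rmult_comm in E. exact E.
Qed.

Lemma t_nonneg n : 0 <= t n.
Proof.
  unfold t, A. pose proof (pos_INR (b n)). pose proof (pos_INR (a n)).
  destruct (Req_dec (INR (a n)) 0) as [E|E].
  - rewrite E. unfold Rdiv. rewrite Rinv_0. lra.
  - apply Rdiv_le_0_compat; lra.
Qed.

Lemma t_bound2 n : (n0 <= n)%nat -> (1 <= n)%nat -> t n <= exp (ln 2 * C1) * Rpower (INR n) (-q).
Proof.
  intros H1 H2. eapply Rle_trans. apply t_bound; auto.
  unfold Rpower. rewrite <- exp_plus. apply exp_le_exp.
  pose proof (beta_bound n H2). pose proof (lam_lower n H1 H2). pose proof (lam_nonneg n H2).
  pose proof eta0_pos. rewrite q_eq.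
  assert (0 <= ln (INR n)) by (apply ln_nonneg; apply (le_INR 1); lia).
  assert (eta0 < 1). { unfold eta0. apply (Rmult_lt_reg_r (2*(1+eps))). lra. unfold Rdiv. rewrite Rmult_assoc, Rinv_l by lra. lra. }
  nra.
Qed.

Lemma conv N : (n0 <= N)%nat -> (1 <= N)%nat -> exists S, infinite_sum (fun k => t (N + k)%nat) S.
Proof.
  intros H1 H2.
  assert (Hq : 1 < q) by (unfold q; lra).
  destruct (growing_cv (fun n => sum_f_R0 (fun k => t (N + k)%nat) n)) as [S HS].
  - intros n. simpl. pose proof (t_nonneg (N + S n)). lra.
  - exists (exp (ln 2 * C1) * (q / (q-1))). intros x [n ->].
    pose proof (pseries q N Hq H2 n).
    assert (sum_f_R0 (fun k => t (N + k)%nat) n <= sum_f_R0 (fun k => Rpower (INR (N + k)) (-q) * exp (ln 2 * C1)) n).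
    { apply sum_Rle. intros k _. rewrite Rmult_comm. apply t_bound2; lia. }
    rewrite <- scal_sum in H0. pose proof (exp_pos (ln 2 * C1)). nra.
  - exists S. exact HS.
Qed.


Variables (c delta : R) (N2 : nat).
Hypotheses (hc0 : 0 < c) (hc1 : c < 1) (hdelta : 0 < delta) (HN2a : (n0 <= N2)%nat) (HN2b : (2 <= N2)%nat).
Hypothesis Hneg : forall N, (N2 <= N)%nat -> forall S,
  infinite_sum (fun k => INR (b (N + k)%nat) / INR (a (N + k)%nat)) S -> delta <= quantity a M c N S.

Let Phi N := (M+1) * Psi (N-1).
Let Zf N := ln 2 * (INR N ^ 2 * Rpower (lam (N-1) / ln 2) c).
Let Kabs := Rabs (ln delta).
Let ZB := q / (q - 1).
Let L0 := ln (2 * ZB).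

Lemma quantity_eq N S : quantity a M c N S = exp (Zf N) * exp (Phi N) * S.
Proof.
  unfold quantity, Zf, Phi, Psi, Rpower at 1, Rpower at 2. unfold log2, lam, A.
  f_equal. f_equal. f_equal. ring.
Qed.

Lemma cst_cv (B : R) : Un_cv (fun _ => B) B.
Proof. intros e He. exists 0%nat. intros n _. unfold R_dist. rewrite Rminus_diag, Rabs_R0. lra. Qed.

Lemma ZB_gt1 : 1 < ZB.
Proof. unfold ZB, q. apply (Rmult_lt_reg_r (1 + eps/2 - 1)). lra.
  unfold Rdiv. rewrite Rmult_assoc, Rinv_l by lra. lra. Qed.

Lemma find_m N : (N2 <= N)%nat -> exists m, (N <= m)%nat /\
  lam m <= Kabs + Phi N + Zf N + q * ln (INR m) + L0 + beta m.
Proof.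
  intros HN. destruct (conv N ltac:(lia) ltac:(lia)) as [S HS].
  pose proof (Hneg N HN S HS) as HQ. rewrite quantity_eq in HQ.
  apply NNPP. intros Hn.
  assert (Hall : forall m, (N <= m)%nat -> Kabs + Phi N + Zf N + q * ln (INR m) + L0 + beta m < lam m).
  { intros m Hm. apply Rnot_le_lt. intros Hc. apply Hn. exists m. auto. }
  set (Lam := Kabs + Phi N + Zf N).
  assert (Hq : 1 < q) by (unfold q; lra).
  assert (HZB := ZB_gt1).
  assert (Ht : forall k, t (N + k)%nat <= exp (- Lam) / (2 * ZB) * Rpower (INR (N + k)) (-q)).
  { intros k. eapply Rle_trans. apply t_bound; lia.
    specialize (Hall (N+k)%nat ltac:(lia)).
    unfold Rpower. unfold Rdiv. rewrite <- (exp_ln (/ (2 * ZB))) by (apply Rinv_0_lt_compat; lra).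
    rewrite <- !exp_plus. apply exp_le_exp. rewrite ln_Rinv by lra. fold L0. unfold Lam in *. lra. }
  assert (Hsum : forall n, sum_f_R0 (fun k => t (N + k)%nat) n <= exp (- Lam) / 2).
  { intros n. eapply Rle_trans. apply sum_Rle. intros k _. rewrite Rmult_comm. apply Ht.
    rewrite <- scal_sum. pose proof (pseries q N Hq ltac:(lia) n). fold ZB in H.
    assert (0 < exp (- Lam) / (2 * ZB)) by (apply Rdiv_lt_0_compat; [apply exp_pos| lra]).
    assert (exp (- Lam) / 2 = exp (- Lam) / (2 * ZB) * ZB) by (field; lra). rewrite H1.
    apply Rmult_le_compat_l; lra. }
  assert (HS2 : S <= exp (- Lam) / 2).
  { exact (Rle_cv_lim Hsum HS (cst_cv _)). }
  assert (Hd : exp (- Kabs) <= delta).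
  { rewrite <- (exp_ln delta) by lra. apply exp_le_exp. unfold Kabs.
    pose proof (Rle_abs (- ln delta)). rewrite Rabs_Ropp in H. lra. }
  assert (exp (- Lam) <= S).
  { unfold Lam. replace (- (Kabs + Phi N + Zf N)) with (- Kabs + - Zf N + - Phi N) by ring.
    rewrite !exp_plus.
    assert (E1 : exp (- Zf N) * exp (Zf N) = 1) by (rewrite <- exp_plus, Rplus_opp_l; apply exp_0).
    assert (E2 : exp (- Phi N) * exp (Phi N) = 1) by (rewrite <- exp_plus, Rplus_opp_l; apply exp_0).
    assert (0 < exp (- Zf N)) by apply exp_pos. assert (0 < exp (- Phi N)) by apply exp_pos.
    assert (0 < exp (Zf N)) by apply exp_pos. assert (0 < exp (Phi N)) by apply exp_pos.
    assert (delta * (exp (- Zf N) * exp (- Phi N)) <= S).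
    { replace S with (exp (Zf N) * exp (Phi N) * S * (exp (- Zf N) * exp (- Phi N))).
      apply Rmult_le_compat_r; nra.
      transitivity (S * ((exp (- Zf N) * exp (Zf N)) * (exp (- Phi N) * exp (Phi N)))); [ring|].
      rewrite E1, E2. ring. }
    assert (0 < exp (- Zf N) * exp (- Phi N)) by nra.
    nra. }
  pose proof (exp_pos (- Lam)). lra.
Qed.


Let r := M + 2.
Let cp := Rmax c kappa.
Let rhop := Rpower r cp.
Let rho := Rpower r ((1 + cp) / 2).
Hypothesis hlimsup : forall (K : R) (N : nat), exists n, (N <= n)%nat /\ (1 <= n)%nat /\
       K < Rpower (INR (a n)) (/ (M + 2) ^ n).

Section GS.
Variable G : R.
Hypothesis HGp : 1 <= G.
Hypothesis HG : forall N : nat, INR N ^ 2 * rhop ^ N <= G * rho ^ N.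
Let es := (r - rho) / (2 * r).
Variables (eta C2 : R).
Hypotheses (Heta : 0 < eta) (Heta1 : eta * G <= 1) (Heta2 : eta * G <= es / 4)
  (Heta3 : eta * G * (4 / eta0) <= es / 4).
Hypothesis HC2 : forall z, 0 <= z -> Rpower z cp <= eta * z + C2.
Let cZ := (eta * ln 2 + ln 2 * C2) * G.
Let k1 := Kabs + L0 + ln 2 * C1 + cZ.
Let cB := eta * G * ln 2 + eta * G * (2 / eta0) * k1 + ln 2 * C2 * G.
Let cE := Kabs + L0 + cZ + q * G + cB.
Section Inner.
Variable Q : R.
Hypotheses (HQ0 : 0 < Q) (HQ1 : cE + 2 * q <= (es / 2) * Q) (HQ2 : 2 * Phi N2 <= Q).
Let X := (2 / eta0) * (k1 + 2 * Q).

Lemma r_ge2 : 2 <= r.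
Proof. unfold r; lra. Qed.

Lemma cp_bounds : 0 < cp < 1 /\ c <= cp /\ kappa <= cp.
Proof. unfold cp. split; [split|split].
  - pose proof (Rmax_l c kappa); lra.
  - apply Rmax_lub_lt; lra.
  - apply Rmax_l.
  - apply Rmax_r.
Qed.

Lemma rho_bounds : 1 <= rhop <= rho /\ rho < r.
Proof.
  destruct cp_bounds as [[H1 H2] _]. pose proof r_ge2.
  split; [split|].
  - unfold rhop. rewrite <- (Rpower_O r) at 1 by lra. apply Rle_Rpower; lra.
  - unfold rhop, rho. apply Rle_Rpower; lra.
  - unfold rho. rewrite <- (Rpower_1 r) at 2 by lra. apply Rpower_lt; lra.
Qed.

Lemma es_pos : 0 < es.
Proof. destruct rho_bounds. pose proof r_ge2. unfold es. apply Rdiv_lt_0_compat; lra. Qed.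

Lemma C1_ge1 : 1 <= C1.
Proof. pose proof (HC1 0 (Rle_refl 0)). rewrite Rpower0 in H. lra. Qed.

Lemma C2_ge1 : 1 <= C2.
Proof. pose proof (HC2 0 (Rle_refl 0)). rewrite Rpower0 in H. lra. Qed.

Lemma L0_pos : 0 < L0.
Proof. unfold L0. pose proof ZB_gt1. rewrite <- ln_1. apply ln_increasing; lra. Qed.

Lemma Kabs_nonneg : 0 <= Kabs.
Proof. unfold Kabs. apply Rabs_pos. Qed.

Lemma Psi_S n : Psi (S n) = Psi n + lam (S n).
Proof. unfold Psi. simpl. rewrite ln_mult. reflexivity. apply prod_pos; auto.
  pose proof (A_ge1 (S n) ltac:(lia)). unfold A in H. lra. Qed.

Lemma Psi_nonneg n : 0 <= Psi n.
Proof. induction n. unfold Psi. simpl. rewrite ln_1. lra. rewrite Psi_S. pose proof (lam_nonneg (S n) ltac:(lia)). lra. Qed.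

Lemma Phi_nonneg N : 0 <= Phi N.
Proof. unfold Phi. pose proof (Psi_nonneg (N-1)). apply Rmult_le_pos; lra. Qed.

Lemma lam_Phi N : (2 <= N)%nat -> lam (N-1) <= Phi N.
Proof. intros H. unfold Phi. replace (N-1)%nat with (S (N-2)) by lia. rewrite Psi_S.
  pose proof (Psi_nonneg (N-2)). pose proof (lam_nonneg (S (N-2)) ltac:(lia)). nra. Qed.

Lemma block n j : Psi (n + j) <= Psi n + INR j * lam (n + j).
Proof.
  induction j as [|j IH]. rewrite Nat.add_0_r. simpl. lra.
  replace (n + S j)%nat with (S (n + j)) by lia. rewrite Psi_S, S_INR.
  destruct j. simpl. rewrite Nat.add_0_r in *. lra.
  assert (lam (n + S j) <= lam (S (n + S j))) by (apply lam_mono; lia).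
  pose proof (pos_INR (S j)). nra.
Qed.

Lemma rhop_le N : rhop ^ N <= G * rho ^ N.
Proof. destruct N. simpl. lra.
  pose proof (HG (S N)). assert (1 <= INR (S N) ^ 2) by (apply pow_R1_Rle; apply (le_INR 1); lia).
  assert (0 <= rhop ^ S N) by (apply pow_le; destruct rho_bounds; lra). nra. Qed.

Lemma powbound z Y0 N k : 0 <= z <= Y0 * r ^ N -> 1 <= Y0 -> 0 <= k <= cp ->
  Rpower z k <= (eta * Y0 + C2) * rhop ^ N.
Proof.
  intros Hz HY Hk. pose proof r_ge2.
  assert (1 <= r ^ N) by (apply pow_R1_Rle; lra).
  eapply Rle_trans. apply (Rpower_mono2 z (Y0 * r ^ N) k cp); [exact Hz| nra | exact Hk].
  rewrite <- Rpower_mult_distr by (try apply pow_lt; lra).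
  rewrite Rpower_pow_distr by lra. fold rhop.
  assert (0 <= rhop ^ N) by (apply pow_le; destruct rho_bounds; lra).
  apply Rmult_le_compat_r; auto. apply HC2. lra.
Qed.

Definition Good N := (N2 <= N)%nat /\ Phi N + (Q / 2) * rho ^ N <= Q * r ^ N.

Lemma Zf_bound N : Good N -> Zf N <= (eta * G * Q + cZ) * rho ^ N.
Proof.
  intros [HN HP]. pose proof ln2_pos. pose proof r_ge2. destruct rho_bounds as [[Hr1 Hr2] Hr3].
  destruct cp_bounds as [[Hc1' Hc2'] [Hc3 Hc4]].
  pose proof (lam_Phi N ltac:(lia)). pose proof (lam_nonneg (N-1) ltac:(lia)).
  pose proof (Phi_nonneg N).
  assert (0 <= rho ^ N) by (apply pow_le; lra).
  assert (Hb : Rpower (lam (N-1) / ln 2) c <= (eta * (1 + Q / ln 2) + C2) * rhop ^ N).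
  { apply powbound; [split| |lra].
    - apply Rdiv_le_0_compat; lra.
    - assert (0 <= (Q/2) * rho ^ N) by (apply Rmult_le_pos; lra).
      assert (Phi N <= Q * r ^ N) by lra.
      assert (lam (N - 1) / ln 2 <= Q * r^N / ln 2).
      { unfold Rdiv. apply Rmult_le_compat_r. apply Rlt_le, Rinv_0_lt_compat; lra. lra. }
      assert (1 <= r ^ N) by (apply pow_R1_Rle; lra).
      assert (Q * r ^ N / ln 2 <= (1 + Q / ln 2) * r ^ N) by (unfold Rdiv; nra). lra.
    - assert (0 <= Q / ln 2) by (apply Rdiv_le_0_compat; lra). lra. }
  unfold Zf. pose proof (HG N). pose proof C2_ge1.
  assert (0 <= INR N ^ 2) by (apply pow_le, pos_INR).
  assert (0 <= eta * (1 + Q / ln 2) + C2) by (assert (0 <= Q / ln 2) by (apply Rdiv_le_0_compat; lra); nra).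
  assert (INR N ^ 2 * Rpower (lam (N - 1) / ln 2) c <= (eta * (1 + Q / ln 2) + C2) * (G * rho ^ N)).
  { eapply Rle_trans. apply Rmult_le_compat_l; [lra| exact Hb]. nra. }
  assert (Heq : ln 2 * ((eta * (1 + Q / ln 2) + C2) * (G * rho ^ N)) = (eta * G * Q + cZ) * rho ^ N)
    by (unfold cZ; field; lra).
  rewrite <- Heq. apply Rmult_le_compat_l; lra.
Qed.


Lemma step N : Good N -> exists m, (N <= m)%nat /\ Good (S m) /\ lam m <= X * r ^ N.
Proof.
  intros [HN HP].
  destruct (find_m N HN) as [m [Hm Hl]].
  pose proof ln2_pos as Hln2. pose proof r_ge2 as Hr2. destruct rho_bounds as [[Hr1 Hr1'] Hr3].
  destruct cp_bounds as [[Hc1' Hc2'] [Hc3 Hc4]].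
  pose proof eta0_pos as He0. pose proof es_pos as Hes. pose proof C1_ge1. pose proof C2_ge1.
  pose proof L0_pos. pose proof Kabs_nonneg.
  assert (Heta0 : eta0 < 1). { unfold eta0. apply (Rmult_lt_reg_r (2*(1+eps))). lra. unfold Rdiv. rewrite Rmult_assoc, Rinv_l by lra. lra. }
  set (R0 := r ^ N). set (P := rho ^ N).
  assert (HR1 : 1 <= R0) by (apply pow_R1_Rle; lra).
  assert (HP1 : 1 <= P) by (apply pow_R1_Rle; lra).
  assert (HPR : P <= R0) by (apply pow_incr; lra).
  assert (HPhi0 := Phi_nonneg N).
  assert (HPhiQ : Phi N <= Q * R0). { assert (0 <= Q/2*P) by (apply Rmult_le_pos; lra). fold R0 P in HP. lra. }
  assert (HZ := Zf_bound N (conj HN HP)). fold P in HZ.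
  assert (HcZ : 0 <= cZ). { unfold cZ. apply Rmult_le_pos; [|lra]. nra. }
  assert (HetaG : 0 < eta * G) by nra.
  assert (HZ' : Zf N <= (Q + cZ) * R0).
  { assert ((eta * G * Q + cZ) * P <= (Q + cZ) * P) by (apply Rmult_le_compat_r; nra). nra. }
  assert (Hm1 : (1 <= m)%nat) by lia.
  pose proof (beta_bound m Hm1) as Hbeta. pose proof (lam_lower m ltac:(lia) Hm1) as Hlow.
  pose proof (lam_nonneg m Hm1) as Hlm0.
  assert (Hlnm : 0 <= ln (INR m)) by (apply ln_nonneg; apply (le_INR 1); lia).
  assert (Hqlnm : q * ln (INR m) <= (1 - eta0) * lam m).
  { rewrite q_eq. rewrite Rmult_assoc. apply Rmult_le_compat_l; lra. }
  assert (Hcrude : lam m <= X * R0).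
  { assert (eta0 / 2 * lam m <= Kabs + Phi N + Zf N + L0 + ln 2 * C1) by lra.
    assert (Kabs + Phi N + Zf N + L0 + ln 2 * C1 <= (k1 + 2 * Q) * R0).
    { unfold k1. assert (0 <= ln 2 * C1) by nra. nra. }
    unfold X. apply (Rmult_le_reg_l (eta0 / 2)). lra.
    replace (eta0 / 2 * (2 / eta0 * (k1 + 2 * Q) * R0)) with ((k1 + 2 * Q) * R0) by (field; lra). lra. }
  assert (HX : 0 <= X).
  { unfold X, k1. apply Rmult_le_pos. apply Rdiv_le_0_compat; lra. assert (0 <= ln 2 * C1) by nra. lra. }
  assert (Hbeta2 : beta m <= ((es / 4) * Q + cB) * P).
  { unfold beta.
    assert (Hb : Rpower (lam m / ln 2) kappa <= (eta * (1 + X / ln 2) + C2) * rhop ^ N).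
    { apply powbound; [split| |lra].
      - apply Rdiv_le_0_compat; lra.
      - assert (lam m / ln 2 <= X * R0 / ln 2).
        { unfold Rdiv. apply Rmult_le_compat_r. apply Rlt_le, Rinv_0_lt_compat; lra. lra. }
        fold R0. assert (X * R0 / ln 2 <= (1 + X / ln 2) * R0) by (unfold Rdiv; nra). lra.
      - assert (0 <= X / ln 2) by (apply Rdiv_le_0_compat; lra). lra. }
    pose proof (rhop_le N) as Hrg. fold P in Hrg.
    assert (0 <= eta * (1 + X / ln 2) + C2) by (assert (0 <= X / ln 2) by (apply Rdiv_le_0_compat; lra); nra).
    assert (Rpower (lam m / ln 2) kappa <= (eta * (1 + X / ln 2) + C2) * (G * P)).
    { eapply Rle_trans. exact Hb. apply Rmult_le_compat_l; lra. }
    assert (Heq : ln 2 * ((eta * (1 + X / ln 2) + C2) * (G * P)) =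
        (eta * G * ln 2 + eta * G * (2 / eta0) * k1 + ln 2 * C2 * G + eta * G * (4 / eta0) * Q) * P)
      by (unfold X; field; lra).
    assert (ln 2 * Rpower (lam m / ln 2) kappa <= ln 2 * ((eta * (1 + X / ln 2) + C2) * (G * P)))
      by (apply Rmult_le_compat_l; lra).
    match goal with H : ln 2 * Rpower _ _ <= _ |- _ => rewrite Heq in H end. unfold cB.
    assert (eta * G * (4 / eta0) * Q * P <= es / 4 * Q * P).
    { apply Rmult_le_compat_r; [lra|]. apply Rmult_le_compat_r; lra. }
    nra. }
  assert (Hbeta0 : 0 <= beta m) by (unfold beta; pose proof (Rpower_pos (lam m / ln 2) kappa); nra).
  assert (HN1 : (1 <= N)%nat) by lia.
  assert (HINRN : 1 <= INR N) by (apply (le_INR 1); lia).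
  assert (HlnN : q * ln (INR N) <= q * G * P).
  { pose proof (ln_le_xm1 (INR N) ltac:(lra)) as Hl1.
    pose proof (HG N) as HGN. fold P in HGN.
    assert (1 <= rhop ^ N) by (apply pow_R1_Rle; lra).
    assert (INR N - 1 <= INR N ^ 2) by nra.
    assert (INR N ^ 2 <= INR N ^ 2 * rhop ^ N) by (assert (0 <= INR N ^ 2) by nra; nra).
    assert (0 < q) by (unfold q; lra).
    assert (ln (INR N) <= G * P) by lra. nra. }
  assert (HlnN0 : 0 <= ln (INR N)) by (apply ln_nonneg; lra).
  assert (HZ0 : 0 <= Zf N).
  { unfold Zf. pose proof (Rpower_pos (lam (N - 1) / ln 2) c). assert (0 <= INR N ^ 2) by nra.
    apply Rmult_le_pos; [lra|]. apply Rmult_le_pos; lra. }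
  set (E0 := Kabs + L0 + Zf N + q * ln (INR N) + beta m).
  assert (HE0 : 0 <= E0).
  { unfold E0. assert (0 < q) by (unfold q; lra). assert (0 <= q * ln (INR N)) by (apply Rmult_le_pos; lra). lra. }
  assert (HE0b : E0 + 2 * q <= es * Q * P).
  { unfold E0.
    assert (Zf N <= (es / 4 * Q + cZ) * P).
    { eapply Rle_trans. exact HZ. apply Rmult_le_compat_r; [lra|].
      assert (eta * G * Q <= es / 4 * Q) by (apply Rmult_le_compat_r; lra). lra. }
    assert (cE + 2 * q <= es / 2 * Q) by exact HQ1.
    assert ((cE + 2 * q) * P <= es / 2 * Q * P) by (apply Rmult_le_compat_r; lra).
    unfold cE in *. assert (0 < q) by (unfold q; lra). nra. }
  set (j := (m - N + 1)%nat).
  assert (Hj : (m = (N - 1) + j)%nat) by (unfold j; lia).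
  assert (HJ : 1 <= INR j) by (apply (le_INR 1); unfold j; lia).
  assert (Hlnm2 : ln (INR m) <= ln (INR N) + (INR j - 1)).
  { assert (Hmj : INR m <= INR N * INR j) by (rewrite <- mult_INR; apply le_INR; unfold j; nia).
    assert (Hl2 : ln (INR m) <= ln (INR N * INR j)) by (apply ln_le'; [apply lt_0_INR; lia| lra]).
    rewrite ln_mult in Hl2 by lra. pose proof (ln_le_xm1 (INR j) ltac:(lra)). lra. }
  assert (Hrefined : lam m <= Phi N + E0 + q * (INR j - 1)).
  { unfold E0. assert (0 < q) by (unfold q; lra).
    assert (q * ln (INR m) <= q * (ln (INR N) + (INR j - 1))) by (apply Rmult_le_compat_l; lra). lra. }
  assert (Hblock : Phi (S m) <= Phi N + (M + 1) * INR j * lam m).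
  { unfold Phi. replace (S m - 1)%nat with m by lia. pose proof (block (N-1) j) as Hb.
    rewrite <- Hj in Hb. apply (Rmult_le_compat_l (M+1)) in Hb; [|lra]. lra. }
  assert (Hu : 1 + INR j * (M + 1) + INR j * (INR j - 1) / 2 * (M + 1) ^ 2 <= r ^ j).
  { pose proof (bern2 (M+1) j ltac:(lra)) as Hb. replace (1 + (M+1)) with r in Hb by (unfold r; ring). exact Hb. }
  assert (Hv : rho ^ j * r <= r ^ j * rho).
  { destruct j as [|j']; [simpl in HJ; lra|]. simpl.
    assert (rho ^ j' <= r ^ j') by (apply pow_incr; lra).
    assert (0 <= rho ^ j') by (apply pow_le; lra).
    assert (rho * r * rho ^ j' <= rho * r * r ^ j') by (apply Rmult_le_compat_l; nra). lra. }
  exists m. split; [lia|]. split.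
  - split; [lia|].
    replace (S m) with (N + j)%nat in * by lia. rewrite !pow_add. fold R0 P.
    apply (alg (Phi N) (Phi (N + j)%nat) E0 (lam m) (INR j) (r ^ j) (rho ^ j) P R0 Q q M r rho es); auto; try lra.
    all: fold R0 P in HP; try lra.
    all: try (unfold q; lra).
    all: try (unfold es; reflexivity).
    all: idtac.
  - exact Hcrude.
Qed.


Lemma cover d : forall N, Good N -> forall n, (N <= n <= N + d)%nat -> lam n <= X * r ^ n.
Proof.
  induction d as [d IH] using (well_founded_induction Wf_nat.lt_wf).
  intros N HG0 n Hn.
  destruct (step N HG0) as [m [Hm [HGm Hlm]]].
  pose proof r_ge2.
  assert (HX : 0 <= X).
  { unfold X, k1. pose proof eta0_pos. pose proof C1_ge1. pose proof C2_ge1. pose proof L0_pos.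
    pose proof Kabs_nonneg. pose proof ln2_pos.
    assert (0 <= cZ) by (unfold cZ; apply Rmult_le_pos; nra).
    apply Rmult_le_pos. apply Rdiv_le_0_compat; lra. assert (0 <= ln 2 * C1) by nra. lra. }
  destruct (Compare_dec.le_lt_dec n m) as [Hnm|Hnm].
  - destruct HG0 as [HN _].
    assert (lam n <= lam m) by (apply lam_mono; lia).
    assert (r ^ N <= r ^ n) by (apply Rle_pow; lia || lra).
    assert (X * r ^ N <= X * r ^ n) by (apply Rmult_le_compat_l; auto). lra.
  - apply (IH (N + d - S m)%nat) with (N := S m); auto; lia.
Qed.


Lemma bound_all n : (N2 <= n)%nat -> lam n <= X * r ^ n.
Proof.
  intros Hn. pose proof r_ge2. destruct rho_bounds as [[Hr1 Hr1'] Hr3].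
  assert (HG2 : Good N2).
  { split; [lia|]. assert (1 <= r ^ N2) by (apply pow_R1_Rle; lra).
    assert (rho ^ N2 <= r ^ N2) by (apply pow_incr; lra).
    pose proof (Phi_nonneg N2).
    assert (Q / 2 * rho ^ N2 <= Q / 2 * r ^ N2) by (apply Rmult_le_compat_l; lra).
    assert (Q / 2 <= Q / 2 * r ^ N2) by nra. lra. }
  exact (cover (n - N2) N2 HG2 n ltac:(lia)).
Qed.

End Inner.



Lemma main_false_G : False.
Proof.
  destruct (exQ (cE + 2 * q) (2 * Phi N2) es es_pos) as [Q [HQ0 [HQ1 HQ2]]].
  pose proof r_ge2.
  set (XX := 2 / eta0 * (k1 + 2 * Q)).
  destruct (hlimsup (exp XX) N2) as [n [Hn1 [Hn2 Hlt]]].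
  pose proof (bound_all Q HQ0 HQ1 HQ2 n Hn1) as Hc. fold XX in Hc.
  unfold Rpower in Hlt. apply exp_lt_inv in Hlt.
  fold (A n) in Hlt. fold (lam n) in Hlt. fold r in Hlt.
  assert (0 < r ^ n) by (apply pow_lt; lra).
  assert (XX * r ^ n < lam n).
  { apply (Rmult_lt_compat_r (r ^ n)) in Hlt; auto.
    replace (/ r ^ n * lam n * r ^ n) with (lam n) in Hlt by (field; lra). lra. }
  lra.
Qed.

End GS.

End Main.

Theorem lemma1 (eps kappa M : R) (a b : nat -> nat)
  (heps : 0 < eps) (hk0 : 0 < kappa) (hk1 : kappa < 1) (hM : 0 <= M)
  (ha_pos : forall n, (1 <= n)%nat -> (0 < a n)%nat)
  (hb_pos : forall n, (1 <= n)%nat -> (0 < b n)%nat)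
  (ha_mono : forall n, (1 <= n)%nat -> (a n <= a (S n))%nat)
  (hlimsup : forall (K : R) (N : nat), exists n, (N <= n)%nat /\ (1 <= n)%nat /\
       K < Rpower (INR (a n)) (/ (M + 2) ^ n))
  (hevent : exists n0 : nat, forall n, (n0 <= n)%nat -> (1 <= n)%nat ->
       Rpower (INR n) (1 + eps) <= INR (a n) /\
       INR (b n) <= Rpower 2 (Rpower (log2 (INR (a n))) kappa)) :
  forall c : R, 0 < c -> c < 1 ->
  forall (delta : R), 0 < delta -> forall N0 : nat,
    exists N : nat, (N0 <= N)%nat /\ (2 <= N)%nat /\
      exists S : R,
        infinite_sum (fun k => INR (b (N + k)%nat) / INR (a (N + k)%nat)) S /\
        quantity a M c N S < delta.
Proof.
  intros c hc0 hc1 delta hd N0.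
  destruct hevent as [n0 Hev].
  set (eta0 := eps / (2 * (1 + eps))).
  assert (He0 : 0 < eta0) by (unfold eta0; apply Rdiv_lt_0_compat; lra).
  assert (He1 : eta0 < 1).
  { unfold eta0. apply (Rmult_lt_reg_r (2*(1+eps))). lra. unfold Rdiv. rewrite Rmult_assoc, Rinv_l by lra. lra. }
  destruct (sub_lin kappa ltac:(lra) (eta0 / 2) ltac:(lra)) as [C1 [HC1p HC1]].
  set (N2 := Nat.max N0 (Nat.max n0 2)).
  destruct (classic (exists N : nat, (N0 <= N)%nat /\ (2 <= N)%nat /\
      exists S : R,
        infinite_sum (fun k => INR (b (N + k)%nat) / INR (a (N + k)%nat)) S /\
        quantity a M c N S < delta)) as [Hyes|Hno]; [exact Hyes|exfalso].
  assert (Hneg : forall N, (N2 <= N)%nat -> forall S,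
    infinite_sum (fun k => INR (b (N + k)%nat) / INR (a (N + k)%nat)) S -> delta <= quantity a M c N S).
  { intros N HN S HS. apply Rnot_lt_le. intros Hlt. apply Hno. exists N.
    split; [unfold N2 in HN; lia|]. split; [unfold N2 in HN; lia|]. exists S. auto. }
  set (cp := Rmax c kappa).
  destruct (cp_bounds kappa hk1 c hc0 hc1) as [[Hcp0 Hcp1] [Hcp2 Hcp3]]. fold cp in Hcp0, Hcp1, Hcp2, Hcp3.
  set (r := M + 2).
  set (rhop := Rpower r cp). set (rho := Rpower r ((1 + cp) / 2)).
  assert (Hr : 2 <= r) by (unfold r; lra).
  assert (Hrr : rhop < rho) by (apply Rpower_lt; lra).
  assert (Hrp : 1 <= rhop).
  { unfold rhop. rewrite <- (Rpower_O r) at 1 by lra. apply Rle_Rpower; lra. }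
  assert (Hrho : rho < r).
  { unfold rho. rewrite <- (Rpower_1 r) at 2 by lra. apply Rpower_lt; lra. }
  destruct (poly_exp (rho / rhop)) as [G0 [HG0p HG0]].
  { apply (Rmult_lt_reg_r rhop). lra. unfold Rdiv. rewrite Rmult_assoc, Rinv_l by lra. lra. }
  set (G := Rmax 1 G0).
  assert (HG1 : 1 <= G) by apply Rmax_l.
  assert (HG : forall N : nat, INR N ^ 2 * rhop ^ N <= G * rho ^ N).
  { intros N. pose proof (HG0 N). pose proof (Rmax_r 1 G0). fold G in H0.
    assert (E : rho ^ N = (rho / rhop) ^ N * rhop ^ N).
    { rewrite <- Rpow_mult_distr. f_equal. field. lra. }
    assert (0 <= rhop ^ N) by (apply pow_le; lra).
    assert (0 <= (rho / rhop) ^ N) by (apply pow_le; apply Rdiv_le_0_compat; lra).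
    rewrite E.
    assert (INR N ^ 2 * rhop ^ N <= G0 * (rho / rhop) ^ N * rhop ^ N) by (apply Rmult_le_compat_r; lra).
    assert (G0 * (rho / rhop) ^ N <= G * (rho / rhop) ^ N) by (apply Rmult_le_compat_r; lra).
    assert (G0 * (rho / rhop) ^ N * rhop ^ N <= G * (rho / rhop) ^ N * rhop ^ N) by (apply Rmult_le_compat_r; lra).
    lra. }
  set (es := (r - rho) / (2 * r)).
  assert (Hes : 0 < es) by (unfold es; apply Rdiv_lt_0_compat; lra).
  assert (Hes1 : es < 1).
  { unfold es. apply (Rmult_lt_reg_r (2*r)). lra. unfold Rdiv. rewrite Rmult_assoc, Rinv_l by lra. lra. }
  set (eta := es * eta0 / (16 * G)).
  assert (HetaG : eta * G = es * eta0 / 16) by (unfold eta; field; lra).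
  assert (Heta : 0 < eta) by (unfold eta; apply Rdiv_lt_0_compat; nra).
  destruct (sub_lin cp ltac:(lra) eta Heta) as [C2 [HC2p HC2]].
  apply (main_false_G eps kappa M a b n0 heps hk0 hk1 hM ha_pos ha_mono Hev C1 HC1 c delta N2
           hc0 hc1 hd ltac:(unfold N2; lia) ltac:(unfold N2; lia) Hneg hlimsup G HG1 HG eta C2 Heta).
  - rewrite HetaG. assert (es * eta0 < 1) by nra. lra.
  - change (eta * G <= es / 4). rewrite HetaG. assert (es * eta0 <= es * 4) by nra. lra.
  - change (eta * G * (4 / eta0) <= es / 4). rewrite HetaG.
    assert (es * eta0 / 16 * (4 / eta0) = es / 4) by (field; lra). lra.
  - exact HC2.
Qed.
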